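(* Let $m\ge 2$ be an integer and $n'=2^{2m-1}-2^m-2^{m-1}$. Let $\mathbf{C}$ be a binary linear $[2^{2m}-1,3m]$ code whose set of nonzero weights is $\{2^{2m-1}-2^{m-1},\,2^{2m-1},\,2^{2m-1}+2^{m-1}\}$. Then the code $\mathbf{C}'$ obtained from $\mathbf{C}$ by the extension construction is a minimal binary linear code with parameters $[2^{2m}-1+n',\ 3m,\ 2^{2m-1}-2^{m-1}]_2$ and maximum weight $2^{2m}-2^m$, and it violates the Ashikhmin–Barg condition.
   Context: Extension construction for a binary linear $[N,K]$ code $\mathbf{D}$ with $K\ge2$, minimum nonzero weight $w_{min}$, maximum weight $w_{max}$ and $n'=2w_{min}-w_{max}\ge 1$: choose a basis $\mathbf{r}_1,\dots,\mathbf{r}_K$ with $wt(\mathbf{r}_1)=w_{max}$, $wt(\mathbf{r}_2)=w_{min}$; the extended code is generated by $(\mathbf{1},\mathbf{r}_1),(\mathbf{0},\mathbf{r}_2),\dots,(\mathbf{0},\mathbf{r}_K)$ in $\mathbf{F}_2^{n'+N}$, where $\mathbf{1},\mathbf{0}\in\mathbf{F}_2^{n'}$ are all-one and zero vectors. Minimal code: any two nonzero codewords with nested supports are equal (binary case). Ashikhmin–Barg condition (binary): $w_{min}/w_{max}>1/2$. (Codes $\mathbf{C}$ as in the hypothesis exist, e.g. the Kasami codes.) *)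

(* Defs.v *)
From HB Require Import structures.
From mathcomp Require Import all_boot all_order all_algebra.
Set Implicit Arguments. Unset Strict Implicit. Unset Printing Implicit Defensive.
Import Order.TTheory GRing.Theory Num.Theory.
Local Open Scope ring_scope.

Definition supp (n : nat) (v : 'rV['F_2]_n) : {set 'I_n} := [set j | v 0 j != 0].
Definition wt (n : nat) (v : 'rV['F_2]_n) : nat := #|supp v|.

Definition is_nz_weight (n : nat) (C : {vspace 'rV['F_2]_n}) (w : nat) : Prop :=
  exists c, [/\ c \in C, c != 0 & wt c = w].

Definition min_weight (n : nat) (C : {vspace 'rV['F_2]_n}) (d : nat) : Prop :=
  is_nz_weight C d /\ forall c, c \in C -> c != 0 -> (d <= wt c)%N.

Definition max_weight (n : nat) (C : {vspace 'rV['F_2]_n}) (w : nat) : Prop :=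
  is_nz_weight C w /\ forall c, c \in C -> (wt c <= w)%N.

Definition minimal_code (n : nat) (C : {vspace 'rV['F_2]_n}) : Prop :=
  forall c1 c2, c1 \in C -> c2 \in C -> c1 != 0 -> c2 != 0 ->
    supp c1 \subset supp c2 -> c1 = c2.

Definition ashikhmin_barg (n : nat) (C : {vspace 'rV['F_2]_n}) : Prop :=
  exists wmin wmax, [/\ min_weight C wmin, max_weight C wmax &
    (1 / 2 : rat) < wmin%:R / wmax%:R].

(* Extension construction: given the basis r = [r_1; ...; r_K] (r`_0 = r_1),
   the extended code of length n' + N is spanned by (1, r_1), (0, r_2), ... *)
Definition ext_gen (n' N : nat) (r : seq 'rV['F_2]_N) : seq 'rV['F_2]_(n' + N) :=
  [seq row_mx (const_mx (if i == 0%N then 1 else 0)) r`_i | i <- iota 0 (size r)].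

Definition ext_code (n' N : nat) (r : seq 'rV['F_2]_N) : {vspace 'rV['F_2]_(n' + N)} :=
  <<ext_gen n' r>>%VS.

(* Main.v *)
Require Import Defs.
From HB Require Import structures.
From mathcomp Require Import all_boot all_order all_algebra.
From mathcomp Require Import zify.
From Stdlib Require Import Lia.
Import Order.TTheory GRing.Theory Num.Theory.
Local Open Scope ring_scope.
Lemma F2cases (x : 'F_2) : x = 0 \/ x = 1.
Proof. have h : (val x < 2)%N by exact: ltn_ord x.
case: x h => [[|[|k]] Hk] h /=. left; exact: val_inj. right; exact: val_inj. done. Qed.
Lemma F2sub (x y : 'F_2) : (x != 0 -> y != 0) -> (y - x != 0) = (y != 0) && (x == 0).
Proof. by case: (F2cases x) => ->; case: (F2cases y) => ->; rewrite ?subrr ?subr0 ?sub0r ?oppr_eq0 ?oner_eq0 ?eqxx // => /(_ isT). Qed.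
Lemma F2le (x y : 'F_2) : ((y != 0%R) <= (x != 0%R) + (y - x != 0%R))%N.
Proof. by case: (F2cases x) => ->; case: (F2cases y) => ->; rewrite ?subrr ?subr0 ?sub0r ?oppr_eq0 ?oner_eq0 ?eqxx. Qed.

Lemma wt_row_mx n1 n2 (A : 'rV['F_2]_n1) (B : 'rV['F_2]_n2) :
  wt (row_mx A B) = (wt A + wt B)%N.
Proof.
rewrite /wt /supp -!sum1_card big_mkcond big_split_ord /=.
by congr (_ + _)%N; rewrite [RHS]big_mkcond; apply: eq_bigr => i _ /=; rewrite !inE ?row_mxEl ?row_mxEr.
Qed.

Lemma wt_const n (l : 'F_2) : wt (const_mx l : 'rV['F_2]_n) = ((l != 0%R) * n)%N.
Proof.
rewrite /wt /supp; case: (l =P 0) => [->|/eqP hl] /=.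
  by apply/eqP; rewrite cards_eq0; apply/eqP/setP => j; rewrite !inE mxE eqxx.
rewrite mul1n -[RHS]card_ord; apply: eq_card => j; by rewrite !inE mxE hl.
Qed.

Lemma wt0 n : wt (0 : 'rV['F_2]_n) = 0%N.
Proof. by apply/eqP; rewrite cards_eq0; apply/eqP/setP => j; rewrite !inE mxE eqxx. Qed.

Section Ext.
Variables (n' N : nat) (r : seq 'rV['F_2]_N).
Hypothesis fr : free r.
Local Notation E := (ext_gen n' r).

Lemma size_ext : size E = size r.
Proof. by rewrite /ext_gen size_map size_iota. Qed.

Lemma nth_ext i : (i < size r)%N ->
  E`_i = row_mx (const_mx (if i == 0%N then 1 else 0)) r`_i.
Proof. by move=> hi; rewrite /ext_gen (nth_map 0%N) ?size_iota // nth_iota. Qed.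

Lemma sum_ext (k : 'I_(size r) -> 'F_2) :
  \sum_i k i *: E`_i = row_mx (const_mx (\sum_i k i * (if (i : nat) == 0%N then 1 else 0)))
                              (\sum_i k i *: r`_i).
Proof.
rewrite -[LHS]hsubmxK; congr row_mx.
  rewrite linear_sum; apply/matrixP => a b; rewrite !mxE summxE; apply: eq_bigr => i _.
  by rewrite linearZ /= nth_ext // row_mxKl !mxE.
rewrite linear_sum; apply: eq_bigr => i _.
by rewrite linearZ /= nth_ext // row_mxKr.
Qed.

Lemma mem_ext v : v \in <<E>>%VS ->
  exists l c, [/\ c \in <<r>>%VS, v = row_mx (const_mx l) c & (c = 0 -> v = 0)].
Proof.
move=> /(@coord_span _ _ _ (in_tuple E)) ->.
suff H : forall n (k : 'I_n -> 'F_2), n = size r -> exists l c,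
  [/\ c \in <<r>>%VS, \sum_(i < n) k i *: E`_i = row_mx (const_mx l) c
    & (c = 0 -> \sum_(i < n) k i *: E`_i = 0)].
  exact: H size_ext.
move=> n k hn; subst n.
rewrite sum_ext; eexists; exists (\sum_i k i *: r`_i); split; last first.
- move=> h0; have kz : forall i, k i = 0.
    by apply: (elimT (@freeP _ _ _ (in_tuple r)) fr); rewrite /= h0.
  rewrite h0 big1 ?row_mx0 ?const_mx0 // => i _.
  by rewrite kz mul0r.
- reflexivity.
apply: memv_suml => i _; apply: memvZ; apply: memv_span; exact: mem_nth.
Qed.

Lemma free_ext : free E.
Proof.
apply/(@freeP _ _ _ (in_tuple E)) => /=.
suff H : forall n (k : 'I_n -> 'F_2), n = size r ->
  \sum_(i < n) k i *: E`_i = 0 -> forall i, k i = 0 by move=> k; apply: H size_ext.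
move=> n k hn; subst n.
rewrite sum_ext => /eqP; rewrite -row_mx0 => /eqP /eq_row_mx [_ h0].
by apply: (elimT (@freeP _ _ _ (in_tuple r)) fr).
Qed.

Variables (lo hi : nat) (C : {vspace 'rV['F_2]_N}).
Hypothesis hC : <<r>>%VS = C.
Hypothesis hb : forall c, c \in C -> c != 0 -> (lo <= wt c <= hi)%N.
Hypothesis hn : (0 < n')%N.
Let i0 : 'I_(n' + N) := lshift N (Ordinal hn).

Lemma bounds v : v \in <<E>>%VS -> v != 0 ->
  (lo + (v ord0 i0 != 0%R) * n' <= wt v <= hi + (v ord0 i0 != 0%R) * n')%N.
Proof.
case/mem_ext => l [c [hc -> hz]] hv.
have cn0 : c != 0 by apply/eqP => /hz /eqP; rewrite (negbTE hv).
rewrite hC in hc; have /andP[h1 h2] := hb _ hc cn0.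
rewrite /i0 row_mxEl mxE wt_row_mx wt_const.
move: (nat_of_bool (l != 0)) => t; apply/andP; split; lia.
Qed.

End Ext.

Theorem proposition4p2 (m : nat) (hm : (2 <= m)%N)
  (C : {vspace 'rV['F_2]_(2 ^ (2 * m) - 1)})
  (hdim : \dim C = (3 * m)%N)
  (hweights : forall w, is_nz_weight C w <->
     w \in [:: (2 ^ (2 * m - 1) - 2 ^ (m - 1))%N; (2 ^ (2 * m - 1))%N;
               (2 ^ (2 * m - 1) + 2 ^ (m - 1))%N])
  (r : seq 'rV['F_2]_(2 ^ (2 * m) - 1))
  (hbasis : basis_of C r)
  (hr1 : wt r`_0 = (2 ^ (2 * m - 1) + 2 ^ (m - 1))%N)
  (hr2 : wt r`_1 = (2 ^ (2 * m - 1) - 2 ^ (m - 1))%N) :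
  let C' := ext_code (2 ^ (2 * m - 1) - 2 ^ m - 2 ^ (m - 1)) r in
  [/\ minimal_code C',
      \dim C' = (3 * m)%N,
      min_weight C' (2 ^ (2 * m - 1) - 2 ^ (m - 1))%N,
      max_weight C' (2 ^ (2 * m) - 2 ^ m)%N
    & ~ ashikhmin_barg C'].
Proof.
move=> C'.
have e1 : (2 ^ m = 2 * 2 ^ (m - 1))%N by rewrite -expnS; congr (2 ^ _)%N; lia.
have e2 : (2 ^ (2 * m) = 2 * 2 ^ (2 * m - 1))%N by rewrite -expnS; congr (2 ^ _)%N; lia.
have e3 : (2 ^ (2 * m - 1) = 2 ^ (m - 1) * 2 ^ m)%N by rewrite -expnD; congr (2 ^ _)%N; lia.
have b2 : (2 ^ 1 <= 2 ^ (m - 1))%N by rewrite leq_pexp2l //; lia.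
have a4 : (4 * 2 ^ (m - 1) <= 2 ^ (2 * m - 1))%N by rewrite e3 e1; nia.
have fr : free r by case/andP: hbasis.
have hC : <<r>>%VS = C by case/andP: hbasis => /eqP.
have szr : size r = (3 * m)%N by rewrite -hdim (size_basis (X := in_tuple r) hbasis).
have hb : forall c, c \in C -> c != 0 ->
    (2 ^ (2 * m - 1) - 2 ^ (m - 1) <= wt c <= 2 ^ (2 * m - 1) + 2 ^ (m - 1))%N.
  move=> c hc hc0; have : is_nz_weight C (wt c) by exists c.
  move/hweights; rewrite !inE => /or3P [] /eqP ->; apply/andP; split; lia.
have hn : (0 < 2 ^ (2 * m - 1) - 2 ^ m - 2 ^ (m - 1))%N by lia.
have K := @bounds _ _ r fr _ _ C hC hb hn.
set i0 := lshift _ _ in K.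
have hE0 : (ext_gen (2 ^ (2 * m - 1) - 2 ^ m - 2 ^ (m - 1)) r)`_0 \in C' by apply: memv_span; apply: mem_nth; rewrite size_ext; lia.
have hE1 : (ext_gen (2 ^ (2 * m - 1) - 2 ^ m - 2 ^ (m - 1)) r)`_1 \in C' by apply: memv_span; apply: mem_nth; rewrite size_ext; lia.
have wE0 : wt (ext_gen (2 ^ (2 * m - 1) - 2 ^ m - 2 ^ (m - 1)) r)`_0 = (2 ^ (2 * m) - 2 ^ m)%N.
  rewrite nth_ext; last by rewrite szr; lia.
  by rewrite wt_row_mx wt_const hr1 oner_eq0 /=; lia.
have wE1 : wt (ext_gen (2 ^ (2 * m - 1) - 2 ^ m - 2 ^ (m - 1)) r)`_1 = (2 ^ (2 * m - 1) - 2 ^ (m - 1))%N.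
  rewrite nth_ext; last by rewrite szr; lia.
  by rewrite wt_row_mx wt_const hr2 eqxx.
have nzE : forall v : 'rV['F_2]_((2 ^ (2 * m - 1) - 2 ^ m - 2 ^ (m - 1)) + (2 ^ (2 * m) - 1)), (0 < wt v)%N -> v != 0.
  by move=> v hv; apply/eqP => hv0; move: hv; rewrite hv0 wt0.
have hmin : min_weight C' (2 ^ (2 * m - 1) - 2 ^ (m - 1)).
  split; first by exists (ext_gen (2 ^ (2 * m - 1) - 2 ^ m - 2 ^ (m - 1)) r)`_1; split => //; apply: nzE; lia.
  move=> c hc hc0; have /andP[h1 _] := K c hc hc0; move: h1; case: (_ != _) => /= h1; lia.
have hmax : max_weight C' (2 ^ (2 * m) - 2 ^ m).
  split; first by exists (ext_gen (2 ^ (2 * m - 1) - 2 ^ m - 2 ^ (m - 1)) r)`_0; split => //; apply: nzE; lia.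
  move=> c hc; case: (c =P 0) => [->|/eqP hc0]; first by rewrite wt0.
  have /andP[_ h2] := K c hc hc0; move: h2; case: (c ord0 i0 != 0) => /= h2; lia.
split => //.
- move=> v1 v2 h1 h2 n1 n2 hs; apply/eqP; apply/negPn/negP => hne.
  have hw : v2 - v1 \in C' by rewrite memvB.
  have nw : v2 - v1 != 0 by rewrite subr_eq0 eq_sym.
  have sw : supp (v2 - v1) = supp v2 :\: supp v1.
    apply/setP => j; move/subsetP: hs => /(_ j); rewrite !inE !mxE => hj.
    by rewrite F2sub // negbK andbC.
  have ww : wt (v2 - v1) = (wt v2 - wt v1)%N.
    by rewrite /wt sw cardsD (setIidPr hs).
  have le12 : (wt v1 <= wt v2)%N by apply: subset_leq_card.
  have := K _ hw nw; have := K _ h1 n1; have := K _ h2 n2.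
  have : ((v2 ord0 i0 != 0%R) <= (v1 ord0 i0 != 0%R) + ((v2 - v1)%R ord0 i0 != 0%R))%N.
    rewrite !mxE; case: (F2cases (v1 ord0 i0)) => ->; case: (F2cases (v2 ord0 i0)) => ->; rewrite ?subrr ?subr0 ?sub0r ?oppr_eq0 ?oner_eq0 ?eqxx //.
  rewrite ww.
  move: (v1 ord0 i0 != 0) (v2 ord0 i0 != 0) ((v2 - v1) ord0 i0 != 0) => [] [] [] /=; clear -e1 a4 le12 hn; lia.
- by rewrite /C' /ext_code; have := @free_ext (2 ^ (2 * m - 1) - 2 ^ m - 2 ^ (m - 1)) _ r fr; rewrite /free => /eqP ->; rewrite size_ext.
case=> wmin [wmax [hmin2 hmax2]].
have -> : wmin = (2 ^ (2 * m - 1) - 2 ^ (m - 1))%N.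
  case: hmin hmin2 => [[c1 [hc1 nc1 wc1]] hl1] [[c2 [hc2 nc2 wc2]] hl2].
  have := hl1 _ hc2 nc2; have := hl2 _ hc1 nc1; lia.
have -> : wmax = (2 * (2 ^ (2 * m - 1) - 2 ^ (m - 1)))%N.
  case: hmax hmax2 => [[c1 [hc1 nc1 wc1]] hl1] [[c2 [hc2 nc2 wc2]] hl2].
  have := hl1 _ hc2; have := hl2 _ hc1; lia.
have : (0 < 2 ^ (2 * m - 1) - 2 ^ (m - 1))%N by lia.
move: (2 ^ (2 * m - 1) - 2 ^ (m - 1))%N => x hx.
have -> : (x%:R / (2 * x)%:R : rat) = 1 / 2.
  by rewrite natrM invfM mulrCA mulfV ?mulr1 ?mul1r // pnatr_eq0 -lt0n.
by rewrite ltxx.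
Qed.
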